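(* Let $G$ be a finite group. Then (1) $\mathrm{MinDim}(G)\leq \mathrm{MinInt}(G)$; and (2) $\mathrm{MaxDim}(G)\leq \mathrm{MaxInt}(G)$.
   Context: A subgroup $H$ of a finite group $G$ is a maximal intersection in $G$ if $H=M_1\cap\dots\cap M_t$ for some maximal subgroups $M_1,\dots,M_t$ of $G$ ($t\ge 1$). Let $\mathcal M(G)$ be the poset (under inclusion) consisting of $G$ and all maximal intersections in $G$. A set $\mathcal X$ of maximal subgroups of $G$ is irredundant if the intersection of the members of $\mathcal X$ is not equal to the intersection of the members of any proper subset of $\mathcal X$. $\mathrm{MaxDim}(G)$ is the maximal size of an irredundant set of maximal subgroups of $G$. An irredundant set is maximal irredundant if it is not properly contained in any other irredundant set of maximal subgroups; $\mathrm{MinDim}(G)$ is the minimal size of a maximal irredundant set. An unrefinable chain in $\mathcal M(G)$ is a chain $K_t<K_{t-1}<\dots<K_0$ of elements of $\mathcal M(G)$ to which no further element of $\mathcal M(G)$ can be added (so it runs from the Frattini subgroup $\Phi(G)$ to $G$ with no element of $\mathcal M(G)$ strictly between consecutive terms); its length is $t$. $\mathrm{MinInt}(G)$ and $\mathrm{MaxInt}(G)$ denote the minimal and the maximal length of an unrefinable chain in $\mathcal M(G)$. *)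

(* Defs.v *)
From mathcomp Require Import all_boot all_fingroup all_solvable.

Set Implicit Arguments.
Unset Strict Implicit.
Unset Printing Implicit Defensive.

Local Open Scope group_scope.

Section MaxIntersections.
Variable gT : finGroupType.
Implicit Types (G : {group gT}) (X Y C : {set {set gT}}) (H : {set gT}).

Definition maxsubs G : {set {set gT}} := [set M : {set gT} | maximal M G].

(* Intersection of a family of maximal subgroups of G, taken inside G
   (so the empty family has intersection G). *)
Definition capG G X : {set gT} := G :&: \bigcap_(M in X) M.

Definition irredundant G X :=
  (X \subset maxsubs G) &&
  [forall Y : {set {set gT}}, (Y \proper X) ==> (capG G Y != capG G X)].

Definition max_irredundant G X :=
  irredundant G X &&
  [forall Y : {set {set gT}}, (X \proper Y) ==> ~~ irredundant G Y].

Definition max_intersection G H :=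
  [exists X : {set {set gT}},
     [&& X \subset maxsubs G, X != set0 & H == \bigcap_(M in X) M]].

Definition MG G : {set {set gT}} := (G : {set gT}) |: [set H | max_intersection G H].

Definition is_chain C :=
  [forall H1 in C, forall H2 in C, (H1 \subset H2) || (H2 \subset H1)].

(* C (the set of terms K_t < ... < K_0) is an unrefinable chain in M(G):
   a chain of elements of M(G) to which no further element of M(G)
   can be added.  Its length is t = #|C| - 1. *)
Definition unrefinable_chain G C :=
  [&& C \subset MG G, is_chain C &
      [forall H in MG G, (H \notin C) ==> ~~ is_chain (H |: C)]].

Definition chain_length C := (#|C|).-1.

Lemma irredundant0 G : irredundant G set0.
Proof.
apply/andP; split; first exact: sub0set.
by apply/forallP => Y; rewrite properE sub0set andbF.
Qed.

Lemma exists_max_irredundant G :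
  exists n, [exists X, max_irredundant G X && (#|X| == n)].
Proof.
case: (@arg_maxnP _ set0 (irredundant G) (fun X => #|X|) (irredundant0 G)).
move=> X irrX maxX; exists #|X|; apply/existsP; exists X.
rewrite eqxx andbT /max_irredundant irrX /=.
apply/forallP => Y; apply/implyP => XY; apply/negP => irrY.
have h : #|Y| <= #|X| := maxX Y irrY.
by have := leq_trans (proper_card XY) h; rewrite ltnn.
Qed.

Lemma chainG G : ((set1 (G : {set gT})) \subset MG G) && is_chain (set1 (G : {set gT})).
Proof.
apply/andP; split.
  by rewrite sub1set /MG setU11.
apply/forall_inP => H1 /set1P ->; apply/forall_inP => H2 /set1P ->.
by rewrite subxx.
Qed.

Lemma exists_unrefinable_chain G :
  exists n, [exists C, unrefinable_chain G C && (chain_length C == n)].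
Proof.
case: (@arg_maxnP _ (set1 (G : {set gT}))
         (fun C => (C \subset MG G) && is_chain C) (fun C => #|C|) (chainG G)).
move=> C /andP[sCM chC] maxC; exists (chain_length C); apply/existsP; exists C.
rewrite eqxx andbT /unrefinable_chain sCM chC /=.
apply/forall_inP => H HM; apply/implyP => HC; apply/negP => chHC.
have sHCM : H |: C \subset MG G by rewrite subUset sub1set HM sCM.
have h : #|H |: C| <= #|C| by apply: maxC; rewrite sHCM chHC.
by move: h; rewrite cardsU1 HC add1n ltnn.
Qed.

Definition MaxDim G : nat := \max_(X | irredundant G X) #|X|.
Definition MinDim G : nat := ex_minn (exists_max_irredundant G).
Definition MaxInt G : nat := \max_(C | unrefinable_chain G C) chain_length C.
Definition MinInt G : nat := ex_minn (exists_unrefinable_chain G).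

End MaxIntersections.

(* Main.v *)
Require Import Defs.
From mathcomp Require Import all_boot all_fingroup all_solvable.
Set Implicit Arguments.
Unset Strict Implicit.
Unset Printing Implicit Defensive.

Section Aux.
Variables (gT : finGroupType) (G : {group gT}).

Lemma maxsub_sub (M : {set gT}) : M \in maxsubs G -> M \subset G.
Proof.
rewrite inE => /maxsetp /andP[_ /proper_sub]; apply: subset_trans.
exact: subset_gen.
Qed.

Lemma capG_sub (X : {set {set gT}}) : capG G X \subset G.
Proof. exact: subsetIl. Qed.

Lemma capG0 : capG G set0 = G.
Proof.
apply/setP => x; rewrite /capG in_setI.
case: (x \in G) => //=; apply/bigcapP => M; by rewrite inE.
Qed.

Lemma capGU1 (M : {set gT}) (X : {set {set gT}}) : capG G (M |: X) = capG G X :&: M.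
Proof.
apply/setP => x; rewrite /capG !in_setI.
case: (x \in G) => //=.
apply/bigcapP/andP.
  by move=> h; split; [apply/bigcapP => N NX; apply: h; rewrite in_setU1 NX orbT
                      | apply: h; rewrite setU11].
case=> /bigcapP h xM N; rewrite in_setU1 => /orP[/eqP -> // | ]; exact: h.
Qed.

Lemma capG_anti (X Y : {set {set gT}}) : X \subset Y -> capG G Y \subset capG G X.
Proof.
move=> sXY; apply/subsetP => x; rewrite !in_setI => /andP[-> /bigcapP h] /=.
by apply/bigcapP => M MX; apply: h; apply: (subsetP sXY).
Qed.

Lemma MGP (H : {set gT}) : reflect (exists2 X : {set {set gT}}, X \subset maxsubs G & H = capG G X) (H \in MG G).
Proof.
apply: (iffP idP).
  rewrite /MG in_setU1 => /orP[/eqP -> | ].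
    by exists set0; [exact: sub0set | rewrite capG0].
  rewrite inE => /existsP[X /and3P[sX nX /eqP ->]]; exists X => //.
  apply/esym/setIidPr; apply/subsetP => x /bigcapP h.
  have [M MX] := set0Pn _ nX.
  by apply: (subsetP (maxsub_sub (subsetP sX _ MX))); apply: h.
case=> X sX ->; rewrite /MG in_setU1.
case: (set_0Vmem X) => [-> | [M MX]]; first by rewrite capG0 eqxx.
apply/orP; right; rewrite inE; apply/existsP; exists X.
rewrite sX /=; apply/andP; split; first by apply/set0Pn; exists M.
apply/eqP/setIidPr; apply/subsetP => x /bigcapP h.
by apply: (subsetP (maxsub_sub (subsetP sX _ MX))); apply: h.
Qed.

Lemma MG_sub (H : {set gT}) : H \in MG G -> H \subset G.
Proof. by case/MGP => X _ ->; exact: capG_sub. Qed.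

Definition Phi := capG G (maxsubs G).

Lemma Phi_MG : Phi \in MG G.
Proof. by apply/MGP; exists (maxsubs G). Qed.

Lemma Phi_sub (H : {set gT}) : H \in MG G -> Phi \subset H.
Proof. by case/MGP => X sX ->; apply: capG_anti. Qed.

Lemma G_MG : (G : {set gT}) \in MG G.
Proof. by rewrite /MG setU11. Qed.

Lemma unref_in (C : {set {set gT}}) (H : {set gT}) : unrefinable_chain G C -> H \in MG G ->
  (forall K, K \in C -> (K \subset H) || (H \subset K)) -> H \in C.
Proof.
case/and3P => sC chC /forall_inP unr HM hK.
apply/negPn/negP => HnC; move: (unr H HM); rewrite HnC /= => /negP; apply.
apply/forall_inP => H1; rewrite in_setU1 => /orP[/eqP -> | H1C];
apply/forall_inP => H2; rewrite in_setU1 => /orP[/eqP -> | H2C].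
- by rewrite subxx.
- by rewrite orbC; apply: hK.
- by apply: hK.
- by move/forall_inP: chC => /(_ _ H1C) /forall_inP; apply.
Qed.


Lemma G_in (C : {set {set gT}}) : unrefinable_chain G C -> (G : {set gT}) \in C.
Proof.
move=> uC; apply: (unref_in uC G_MG) => K KC.
by case/and3P: uC => sC _ _; rewrite MG_sub // (subsetP sC).
Qed.

Lemma chain_cmp (C : {set {set gT}}) (K1 K2 : {set gT}) : unrefinable_chain G C -> K1 \in C -> K2 \in C ->
  (K1 \subset K2) || (K2 \subset K1).
Proof.
case/and3P => _ /forall_inP chC _ K1C K2C.
by move/forall_inP: (chC _ K1C); apply.
Qed.

Lemma chain_step (C : {set {set gT}}) : unrefinable_chain G C -> forall n (L : {set gT}), L \in C ->
  #|[set K in C | L \proper K]| <= n ->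
  exists2 X : {set {set gT}}, X \subset maxsubs G &
     capG G X = L /\ #|X| <= #|[set K in C | L \proper K]|.
Proof.
move=> uC; have sC : C \subset MG G by case/and3P: uC.
elim=> [|n IH] L LC hn.
  have LG : L = G.
    apply/eqP; rewrite eqEproper MG_sub ?(subsetP sC) //=.
    apply/negP => LpG; move: hn; rewrite leqn0 => /eqP/cards0_eq/setP/(_ G).
    by rewrite !inE G_in // LpG.
  by exists set0; [exact: sub0set | rewrite capG0 LG cards0].
case: (eqVneq L (G : {set gT})) => [-> | LnG].
  by exists set0; [exact: sub0set | rewrite capG0 cards0].
set A := [set K in C | L \proper K].
have GA : (G : {set gT}) \in A.
  rewrite inE G_in //= properEneq LnG MG_sub //; exact: (subsetP sC).
case: (arg_minnP (fun K : {set gT} => #|K|) GA) => P PA Pmin.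
have PA2 : P \in A := PA.
have [PC LP] : P \in C /\ L \proper P by move: PA2; rewrite /A inE => /andP[].
have minP : forall K, K \in A -> P \subset K.
  move=> K KA; have KC : K \in C by move: KA; rewrite inE => /andP[].
  case/orP: (chain_cmp uC PC KC) => // KP.
  have cPK : #|P| <= #|K| := Pmin K KA.
  have /eqP -> : K == P by rewrite eqEcard KP.
  exact: subxx.
set AP := [set K in C | P \proper K].
have sAPA : AP \proper A.
  rewrite properE; apply/andP; split.
    apply/subsetP => K; rewrite !inE => /andP[-> PK] /=.
    exact: proper_sub_trans LP (proper_sub PK).
  apply/subsetP => /(_ P PA2); by rewrite inE properxx andbF.
have cAP : #|AP| <= n.
  by have := proper_card sAPA => h; rewrite -ltnS; apply: leq_trans h hn.
have [XP sXP [capP cXP]] := IH P PC cAP.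
have /MGP [Y sY LY] : L \in MG G by apply: (subsetP sC).
have [M MY PnM] : exists2 M, M \in Y & ~~ (P \subset M).
  case: (boolP [exists M in Y, ~~ (P \subset M)]) => [/exists_inP [M ? ?]|h]; first by exists M.
  move: h; rewrite negb_exists_in => /forall_inP h.
  exfalso; move: (proper_subn LP) => /negP; apply.
  rewrite LY; apply/subsetP => x xP; rewrite /capG in_setI.
  rewrite (subsetP (MG_sub (subsetP sC _ PC))) //=.
  by apply/bigcapP => N NY; move/(_ N NY)/negPn/subsetP: h => sPN; exact: sPN x xP.
have MM : M \in maxsubs G by apply: (subsetP sY).
set Q := capG G (M |: XP).
have QPM : Q = P :&: M by rewrite /Q capGU1 capP.
have LQ : L \subset Q.
  rewrite QPM subsetI proper_sub //= LY.
  apply/subsetP => x; rewrite in_setI => /andP[_ /bigcapP]; apply; exact: MY.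
have QnP : ~~ (P \subset Q).
  by rewrite QPM subsetI subxx.
have QC : Q \in C.
  apply: (unref_in uC).
    apply/MGP; exists (M |: XP) => //; by rewrite subUset sub1set MM sXP.
  move=> K KC; case/orP: (chain_cmp uC KC LC) => [KL | LK].
    by rewrite (subset_trans KL LQ).
  case: (eqVneq K L) => [-> | KnL]; first by rewrite LQ.
  have KA : K \in A by rewrite inE KC properEneq eq_sym KnL LK.
  by rewrite QPM (subset_trans (subsetIl _ _) (minP K KA)) orbT.
have QL : Q = L.
  apply/eqP; rewrite eq_sym eqEproper LQ /=; apply/negP => LpQ.
  have QA : Q \in A by rewrite inE QC LpQ.
  by move: (minP Q QA); rewrite (negbTE QnP).
exists (M |: XP); first by rewrite subUset sub1set MM sXP.
split; first exact: QL.
rewrite cardsU1; apply: leq_trans (leq_add (leq_b1 _) cXP) _.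
rewrite add1n; exact: proper_card sAPA.
Qed.


Lemma minDim_le (C : {set {set gT}}) : unrefinable_chain G C -> MinDim G <= chain_length C.
Proof.
move=> uC; have sC : C \subset MG G by case/and3P: uC.
have PhiC : Phi \in C.
  apply: (unref_in uC Phi_MG) => K KC; by rewrite Phi_sub ?orbT // (subsetP sC).
set A := [set K in C | Phi \proper K].
have [X sX [capX cX]] := chain_step uC PhiC (leqnn #|A|).
have cA : #|A| <= chain_length C.
  rewrite /chain_length (cardsD1 Phi C) PhiC add1n /=.
  apply: subset_leq_card; apply/subsetP => K; rewrite !inE => /andP[KC PK].
  by rewrite KC andbT; apply/eqP => e; move: PK; rewrite e properxx.
have hX : (X \subset X) && (capG G X == capG G X) by rewrite !subxx eqxx.
case: (@arg_minnP _ X (fun Y : {set {set gT}} => (Y \subset X) && (capG G Y == capG G X)) (fun Y : {set {set gT}} => #|Y|) hX) => Y /andP[sYX /eqP cYX] Ymin.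
have irrY : irredundant G Y.
  rewrite /irredundant (subset_trans sYX sX) /=; apply/forallP => W; apply/implyP => WY.
  apply/negP => /eqP e.
  have hW : (W \subset X) && (capG G W == capG G X).
    by rewrite (subset_trans (proper_sub WY) sYX) e cYX eqxx.
  have := Ymin W hW; have := proper_card WY; rewrite ltnNge => /negP; done.
have mirrY : max_irredundant G Y.
  rewrite /max_irredundant irrY /=; apply/forallP => Z; apply/implyP => YZ.
  apply/negP => /andP[sZ /forallP /(_ Y)]; rewrite YZ /= => /negP; apply.
  rewrite eqEsubset (capG_anti (proper_sub YZ)) andbT cYX capX.
  exact: capG_anti.
rewrite /MinDim; case: ex_minnP => m _ /(_ #|Y|) hm.
apply: leq_trans (hm _) _.
  by apply/existsP; exists Y; rewrite mirrY eqxx.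
apply: leq_trans (subset_leq_card sYX) _; exact: leq_trans cX cA.
Qed.


Lemma irrD1 (X : {set {set gT}}) M : irredundant G X -> M \in X -> irredundant G (X :\ M).
Proof.
case/andP=> sX /forallP irr MX; rewrite /irredundant (subset_trans (subsetDl _ _) sX) /=.
apply/forallP => W; apply/implyP => WX; apply/negP => /eqP e.
have WMX : M |: W \proper X.
  rewrite properEneq subUset sub1set MX (subset_trans (proper_sub WX) (subsetDl _ _)) /= andbT.
  apply/negP => /eqP eX.
  have MW : M \notin W by apply/negP => MW; move: (subsetP (proper_sub WX) M MW); rewrite !inE eqxx.
  by move: WX; rewrite -eX setU1K // properxx.
move: (irr (M |: W)); rewrite WMX /= => /negP; apply.
rewrite capGU1 e -capGU1; apply/eqP; congr capG.
by rewrite setD1K.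
Qed.

Lemma irr_chain n : forall X : {set {set gT}}, #|X| = n -> irredundant G X ->
  exists D : {set {set gT}}, [/\ D \subset MG G, is_chain D, #|D| = n.+1 &
     forall K, K \in D -> capG G X \subset K].
Proof.
elim: n => [|n IH] X cX irrX.
  have -> : X = set0 by apply: cards0_eq.
  exists [set (G : {set gT})]; split.
  - by rewrite sub1set G_MG.
  - by case/andP: (chainG G).
  - by rewrite cards1.
  - by move=> K /set1P ->; rewrite capG0 subxx.
have [M MX] : exists M, M \in X.
  by apply/set0Pn; apply/negP => /eqP X0; move: cX; rewrite X0 cards0.
have cXM : #|X :\ M| = n by move: cX; rewrite (cardsD1 M X) MX add1n => -[].
have [D [sD chD cD hD]] := IH _ cXM (irrD1 irrX MX).
have eX : capG G X = capG G (X :\ M) :&: M by rewrite -capGU1 setD1K.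
have sXMX : X :\ M \proper X by rewrite properD1.
have nD : capG G X \notin D.
  apply/negP => /hD h; case/andP: irrX => _ /forallP /(_ (X :\ M)).
  rewrite sXMX /= eqEsubset h capG_anti ?subsetDl //.
exists (capG G X |: D); split.
- rewrite subUset sub1set sD andbT; apply/MGP; exists X => //; by case/andP: irrX.
- apply/forall_inP => H1; rewrite in_setU1 => /orP[/eqP -> | H1C];
  apply/forall_inP => H2; rewrite in_setU1 => /orP[/eqP -> | H2C].
  + by rewrite subxx.
  + by rewrite eX (subset_trans (subsetIl _ _) (hD _ H2C)).
  + by rewrite eX (subset_trans (subsetIl _ _) (hD _ H1C)) orbT.
  + by move/forall_inP: chD => /(_ _ H1C) /forall_inP; apply.
- by rewrite cardsU1 nD cD.
- move=> K; rewrite in_setU1 => /orP[/eqP -> | KD]; first exact: subxx.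
  by rewrite eX (subset_trans (subsetIl _ _) (hD _ KD)).
Qed.

Lemma maxDim_le : MaxDim G <= MaxInt G.
Proof.
apply/bigmax_leqP => X irrX.
have [D [sD chD cD _]] := irr_chain (erefl #|X|) irrX.
have hD : (D \subset MG G) && is_chain D by rewrite sD chD.
case: (@arg_maxnP _ D (fun C : {set {set gT}} => [&& D \subset C, C \subset MG G & is_chain C])
   (fun C : {set {set gT}} => #|C|)); first by rewrite subxx sD chD.
move=> C /and3P[sDC sCM chC] maxC.
have uC : unrefinable_chain G C.
  rewrite /unrefinable_chain sCM chC /=.
  apply/forall_inP => H HM; apply/implyP => HC; apply/negP => chHC.
  have h : #|H |: C| <= #|C|.
    apply: maxC; rewrite chHC subUset sub1set HM sCM andbT /=. rewrite andbT.
    exact: subset_trans sDC (subsetUr _ _).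
  by move: h; rewrite cardsU1 HC add1n ltnn.
apply: leq_trans (leq_bigmax_cond _ uC); rewrite /chain_length.
by have := subset_leq_card sDC; rewrite cD; case: #|C|.
Qed.

End Aux.

Theorem mainTheorem1 (gT : finGroupType) (G : {group gT}) :
  MinDim G <= MinInt G /\ MaxDim G <= MaxInt G.
Proof.
split; last exact: maxDim_le.
rewrite /MinInt; case: ex_minnP => m /existsP [C /andP[uC /eqP <-]] _.
exact: minDim_le.
Qed.
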